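(* For every fixed $d\ge 0$, the class $\mathcal{S}_d$ is monotone and tiny.
   Context: For $d\ge0$, $\mathcal{S}_d$ is the class of all graphs $G$ such that for every integer $k$ with $1000^{10(d+1)}\le k\le |V(G)|$, every $k$-vertex subgraph of $G$ has at most $k-1+k/\ln k$ edges. A class is monotone if closed under isomorphism and under taking subgraphs; it is tiny if it is hereditary (closed under induced subgraphs) and there is a constant $c$ such that for every $n$ it contains at most $c^n$ unlabeled (up to isomorphism) $n$-vertex graphs. *)

(* Defs.v *)
From Stdlib Require Import Reals.
From mathcomp Require Import all_boot.
From mathcomp Require Import perm boolp.

Set Implicit Arguments.
Unset Strict Implicit.
Unset Printing Implicit Defensive.

Definition simple_graph (T : finType) (e : rel T) : Prop :=
  (forall x y, e x y = e y x) /\ (forall x, e x x = false).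

(* A class of graphs. Membership is only meaningful for simple graphs. *)
Definition graph_class := forall T : finType, rel T -> Prop.

Definition edges (T : finType) (e : rel T) : {set {set T}} :=
  [set [set x; y] | x in T, y in T & e x y].

Definition is_subgraph (T : finType) (e : rel T) (S : {set T})
  (F : {set {set T}}) : Prop :=
  F \subset edges e /\ (forall f, f \in F -> f \subset S).

Definition S_class (d : nat) : graph_class :=
  fun T e => simple_graph e /\
    forall k : nat, 1000 ^ (10 * (d + 1)) <= k <= #|T| ->
    forall (S : {set T}) (F : {set {set T}}),
      #|S| = k -> is_subgraph e S F ->
      Rle (INR #|F|)
          (Rplus (Rminus (INR k) R1) (Rdiv (INR k) (ln (INR k)))).

Definition iso_closed (C : graph_class) : Prop :=
  forall (T T' : finType) (e : rel T) (e' : rel T'),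
    simple_graph e' -> C T e ->
    (exists f : T' -> T, bijective f /\ forall x y, e' x y = e (f x) (f y)) ->
    C T' e'.

(* Closed under (not necessarily induced) subgraphs, up to isomorphism:
   H is a subgraph of G iff H embeds injectively in G preserving edges. *)
Definition subgraph_closed (C : graph_class) : Prop :=
  forall (T T' : finType) (e : rel T) (e' : rel T'),
    simple_graph e' -> C T e ->
    (exists f : T' -> T, injective f /\ forall x y, e' x y -> e (f x) (f y)) ->
    C T' e'.

Definition induced_closed (C : graph_class) : Prop :=
  forall (T T' : finType) (e : rel T) (e' : rel T'),
    simple_graph e' -> C T e ->
    (exists f : T' -> T, injective f /\ forall x y, e' x y = e (f x) (f y)) ->
    C T' e'.

Definition monotone (C : graph_class) : Prop :=
  iso_closed C /\ subgraph_closed C.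

Definition hereditary (C : graph_class) : Prop :=
  iso_closed C /\ induced_closed C.

(* Labelled graphs on 'I_n, encoded by their adjacency table. *)
Definition adj_rel n (g : {ffun 'I_n * 'I_n -> bool}) : rel 'I_n :=
  fun x y => g (x, y).

Definition simpleb n (g : {ffun 'I_n * 'I_n -> bool}) : bool :=
  [forall x, forall y, g (x, y) == g (y, x)] && [forall x, ~~ g (x, x)].

Definition isob n : rel {ffun 'I_n * 'I_n -> bool} :=
  fun g h => [exists p : {perm 'I_n},
                [forall x, forall y, g (x, y) == h (p x, p y)]].

(* Number of unlabeled (up to isomorphism) n-vertex graphs in C:
   number of isomorphism classes of simple graphs on 'I_n lying in C. *)
Definition n_unlabeled (C : graph_class) (n : nat) : nat :=
  #|equivalence_partition (@isob n)
      [set g : {ffun 'I_n * 'I_n -> bool} |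
         simpleb g && `[< C 'I_n (adj_rel g) >]]|.

Definition tiny (C : graph_class) : Prop :=
  hereditary C /\
  exists c : R, forall n : nat, Rle (INR (n_unlabeled C n)) (pow c n).

(* Main.v *)
Require Import Defs.
From Stdlib Require Import Reals Lra.
From mathcomp Require Import all_boot perm boolp zify.
Set Implicit Arguments.
Unset Strict Implicit.
Unset Printing Implicit Defensive.

Lemma edgesP (T : finType) (e : rel T) A :
  reflect (exists x y, e x y /\ A = [set x; y]) (A \in edges e).
Proof.
apply: (iffP idP).
- by move=> H; rewrite /edges in H; case/imset2P: H => x y _; rewrite inE => /andP[_ exy] ->; exists x, y.
- move=> [x [y [exy ->]]]; rewrite /edges; apply/imset2P; apply: (Imset2spec (x1:=x) (x2:=y)) => //.
  by rewrite inE exy andbT.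
Qed.

Lemma S_sub d : subgraph_closed (S_class d).
Proof.
move=> T T' e e' se' [_ HC] [f [finj fe]]; split=> // k /andP[Nk kT'] S' F' cS' [sF' FS'].
have leT : #|T'| <= #|T| := leq_card f finj.
pose F := [set f @: (A : {set T'}) | A in F'] : {set {set T}}.
have cF : #|F| = #|F'| by rewrite card_imset //; apply: imset_inj.
rewrite -cF; apply: (HC k _ (f @: S')).
- by rewrite Nk (leq_trans kT').
- by rewrite card_imset.
split.
- apply/subsetP=> B /imsetP[A AF' ->].
  have /edgesP[x [y [exy ->]]] := subsetP sF' A AF'.
  apply/edgesP; exists (f x), (f y); split; first exact: fe.
  by rewrite imsetU1 imset_set1.
- move=> B /imsetP[A AF' ->]; exact: imsetS (FS' A AF').
Qed.

Lemma S_mono d : monotone (S_class d).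
Proof.
split; last exact: S_sub.
move=> T T' e e' se' C [f [fb fe]]; apply: (S_sub se' C).
by exists f; split; [exact: bij_inj | move=> x y; rewrite fe].
Qed.

Lemma S_induced d : induced_closed (S_class d).
Proof.
move=> T T' e e' se' C [f [fi fe]]; apply: (S_sub se' C).
by exists f; split => // x y; rewrite fe.
Qed.

Lemma expn_pow m k : expn m k = Nat.pow m k.
Proof. by elim: k => // k IH; rewrite expnS IH. Qed.

Section RealS.
Local Open Scope R_scope.

Lemma ln_le' (a b : R) : (0 < a) -> (a <= b) -> (ln a <= ln b).
Proof.
move=> a0 ab; case: (Rle_lt_or_eq_dec _ _ ab) => [lt|->]; last by apply: Rle_refl.
by apply: Rlt_le; apply: ln_increasing.
Qed.

Lemma real_bound (k x : nat) : (3 <= k)%N ->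
  (INR x <= INR k / ln (INR k)) -> ((3 * k ^ 2) ^ x <= 27 ^ k)%N.
Proof.
move=> k3 hx.
have kr3 : (3 <= INR k) by have := le_INR 3 k ltac:(by apply/leP); rewrite /= => H; lra.
have lk0 : (0 < ln (INR k)) by rewrite -ln_1; apply: ln_increasing; lra.
have x0 : (0 <= INR x) := pos_INR x.
have a0 : (0 < INR (3 * k ^ 2)) by apply: lt_0_INR; apply/ltP; rewrite muln_gt0 expn_gt0; lia.
have ak : (ln (INR (3 * k ^ 2)) <= 3 * ln (INR k)).
  replace (3 * ln (INR k)) with (INR 3 * ln (INR k)) by (simpl; ring).
  rewrite -ln_pow; last lra.
  apply: ln_le' => //; rewrite -pow_INR; apply: le_INR; apply/leP.
  rewrite -expn_pow; by rewrite [(k ^ 3)%N]expnS leq_mul2r k3 orbT.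
have l3 : (1 <= ln 3) by rewrite -{1}(ln_exp 1); apply: ln_le'; [apply: exp_pos | apply: exp_le_3].
apply/leP; apply: INR_le; rewrite (expn_pow (3 * k ^ 2)) (expn_pow 27) !pow_INR.
apply: Rnot_lt_le => H.
have p27 : 0 < INR 27 by simpl; lra.
have := ln_increasing _ _ (pow_lt _ k p27) H.
rewrite !ln_pow //.
have -> : INR 27 = (3 ^ 3)%R by simpl; lra.
rewrite ln_pow; last lra.
apply: Rle_not_lt.
have e1 : (INR x * ln (INR (3 * k ^ 2)) <= INR x * (3 * ln (INR k))) by apply: Rmult_le_compat_l.
have e2 : (INR x * (3 * ln (INR k)) <= 3 * INR k).
  have := Rmult_le_compat_r (3 * ln (INR k)) _ _ ltac:(lra) hx.
  have -> : (INR k / ln (INR k) * (3 * ln (INR k)) = 3 * INR k) by field; lra.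
  done.
have e3 : (3 * INR k <= INR k * (INR 3 * ln 3)).
  rewrite /= ; nra.
lra.
Qed.
End RealS.



Lemma tele m : (m + 2) * \prod_(0 <= i < m) (i.+1 * i.+3).+1 =
  2 * (m + 1) * \prod_(0 <= i < m) (i.+1 * i.+3).
Proof.
elim: m => [|m IH]; first by rewrite !big_geq.
rewrite !big_nat_recr //=.
move: IH; set A := \prod_(0 <= i < m) _; set B := \prod_(0 <= i < m) _ => IH.
nia.
Qed.

Lemma col_reindex n v (A : nat -> nat) : v <= n ->
  \prod_(u < n) (if u < v then A (v - u) else 1) = \prod_(0 <= i < v) A i.+1.
Proof.
move=> vn; rewrite -big_mkcond /= -(big_ord_widen_cond n (fun _ => true) (fun u => A (v - u))) //.
rewrite -(big_mkord xpredT (fun u => A (v - u))) big_nat_rev /= big_nat_cond [RHS]big_nat_cond.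
by apply: eq_bigr => i /andP[/andP[_ iv] _]; congr A; rewrite add0n; lia.
Qed.

Lemma col_bound n v : v <= n ->
  \prod_(u < n) (if u < v then ((v - u) * (v - u).+2).+1 else 1) <=
  2 * \prod_(u < n) (if u < v then (v - u) * (v - u).+2 else 1).
Proof.
move=> vn.
rewrite (@col_reindex n v (fun d => (d * d.+2).+1) vn) (@col_reindex n v (fun d => d * d.+2) vn).
have := tele v; set A := \prod_(0 <= i < v) _; set B := \prod_(0 <= i < v) _ => E.
nia.
Qed.

Lemma bin_le m k : 'C(m, k) <= 2 ^ m.
Proof.
elim: m k => [|m IH] [|k] //; first by rewrite bin0 expn_gt0.
rewrite binS expnS mul2n -addnn leq_add //.
Qed.

Section Q.
Variable n : nat.
Notation G := {ffun 'I_n * 'I_n -> bool}.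
Implicit Types h g : G.

Definition qf (h : G) (v : 'I_n) : nat :=
  v - \max_(u : 'I_n | (u < v) && h (u, v)) (v - u).

Lemma qf_le h v : qf h v <= v.
Proof. exact: leq_subr. Qed.

Lemma qf_min h (u v : 'I_n) : u < v -> h (u,v) -> qf h v <= u.
Proof.
move=> uv huv; rewrite /qf.
have M := @leq_bigmax_cond _ (fun w : 'I_n => (w < v) && h (w, v)) (fun w : 'I_n => v - w) u.
rewrite /= uv huv in M; have {}M := M isT.
by rewrite (leq_trans (leq_sub2l _ M)) // subKn // ltnW.
Qed.

Lemma qf_att h v : qf h v < v -> exists2 u : 'I_n, (u < v) && h (u,v) & qf h v = u.
Proof.
rewrite /qf => lt.
case: (pickP (fun w : 'I_n => (w < v) && h (w, v))) => [u0 Pu0 | E].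
  rewrite (bigmax_eq_arg u0) // in lt *.
  case: arg_maxnP => // u /andP[uv hu] _; exists u; first by rewrite uv.
  by rewrite subKn // ltnW.
by move: lt; rewrite big_pred0 ?subn0 ?ltnn.
Qed.

Lemma qf_low h (u v : 'I_n) : u < qf h v -> ~~ h (u,v).
Proof.
move=> uq; apply/negP=> huv.
have uv : u < v := leq_trans uq (qf_le h v).
by have := qf_min uv huv; rewrite leqNgt uq.
Qed.

Lemma qf_eq h h' (v : 'I_n) : (forall u : 'I_n, u < v -> h (u,v) = h' (u,v)) ->
  qf h v = qf h' v.
Proof.
move=> E; rewrite /qf; congr (_ - _); apply: eq_bigl => u; case: ltnP => //= uv; by rewrite E.
Qed.

Lemma qf_spec h (v : 'I_n) (u : 'I_n) : u < v -> h (u, v) ->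
  (forall w : 'I_n, w < u -> ~~ h (w, v)) -> qf h v = u.
Proof.
move=> uv huv low; apply/eqP; rewrite eqn_leq qf_min //=.
case: (ltnP (qf h v) v) => [/qf_att [w /andP[wv hwv] ->] | ].
  by rewrite leqNgt; apply/negP=> wu; have := low w wu; rewrite hwv.
move=> vq; exact: leq_trans (ltnW uv) vq.
Qed.

Definition qmonob (h : G) :=
  [forall u : 'I_n, forall v : 'I_n, (u <= v) ==> (qf h u <= qf h v)].

Definition adjb (h : G) :=
  [forall a : 'I_n, forall b : 'I_n, (val b == a.+1) ==> (qf h a <= qf h b)].

Lemma adj_mono h : adjb h -> qmonob h.
Proof.
move=> /forallP A; apply/forallP=> u; apply/forallP=> v; apply/implyP.
have key : forall m (mn : m < n), u <= m -> qf h u <= qf h (Ordinal mn).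
  elim=> [|m IH] mn um.
    by have -> : u = Ordinal mn by apply: val_inj; apply/eqP; rewrite /= -leqn0.
  move: um; rewrite leq_eqVlt => /orP[/eqP uw | ].
    by have -> : u = Ordinal mn by apply: val_inj.
  rewrite ltnS => um; have mn' : m < n by apply: ltnW.
  apply: (leq_trans (IH mn' um)).
  by move: (A (Ordinal mn')) => /forallP /(_ (Ordinal mn)) /implyP; apply.
move=> uv; have := key v (ltn_ord v) uv.
by have -> : Ordinal (ltn_ord v) = v by apply: val_inj.
Qed.

Definition hs (g : G) (s : {perm 'I_n}) : G := [ffun x => g (s x.1, s x.2)].

Definition lexlt (f1 f2 : 'I_n -> nat) : bool :=
  [exists a : 'I_n, (f1 a < f2 a) && [forall i : 'I_n, (i < a) ==> (f1 i == f2 i)]].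

Lemma lexlt_irr f : ~~ lexlt f f.
Proof. by apply/existsP=> [[a]]; rewrite ltnn. Qed.

Lemma lexlt_trans f1 f2 f3 : lexlt f1 f2 -> lexlt f2 f3 -> lexlt f1 f3.
Proof.
move=> /existsP[a /andP[lta /forallP Ea]] /existsP[b /andP[ltb /forallP Eb]].
apply/existsP; case: (ltngtP a b) => [ab | ba | /val_inj eab].
- exists a; rewrite -(eqP (implyP (Eb a) ab)) lta /=.
  apply/forallP=> i; apply/implyP=> ia.
  by rewrite (eqP (implyP (Ea i) ia)) (eqP (implyP (Eb i) (ltn_trans ia ab))).
- exists b; rewrite (eqP (implyP (Ea b) ba)) ltb /=.
  apply/forallP=> i; apply/implyP=> ib.
  by rewrite (eqP (implyP (Ea i) (ltn_trans ib ba))) (eqP (implyP (Eb i) ib)).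
- subst b; exists a; rewrite (ltn_trans lta ltb) /=.
  apply/forallP=> i; apply/implyP=> ia.
  by rewrite (eqP (implyP (Ea i) ia)) (eqP (implyP (Eb i) ia)).
Qed.

Lemma swap_step g s (a b : 'I_n) : val b = a.+1 -> qf (hs g s) b < qf (hs g s) a ->
  lexlt (qf (hs g (tperm a b * s))) (qf (hs g s)).
Proof.
move=> ba qlt.
have tfix (u : 'I_n) : u < a -> tperm a b u = u.
  move=> ua; apply: tpermD; apply/eqP=> E; subst u.
  - by rewrite ltnn in ua.
  - by move: ua; rewrite ba ltnNge leqW.
apply/existsP; exists a; apply/andP; split.
- have qba : qf (hs g s) b < a.
    by apply: (leq_trans qlt); exact: qf_le.
  have ab : a < b by rewrite ba.
  have [u /andP[ub hub] qu] := qf_att (ltn_trans qba ab).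
  have ua : u < a by rewrite -qu.
  apply: leq_ltn_trans qlt; rewrite qu; apply: qf_min => //.
  move: hub; rewrite /hs !ffunE /= !permM tpermL tfix //.
- apply/forallP=> i; apply/implyP=> ia; apply/eqP; apply: qf_eq => u ui.
  by rewrite /hs !ffunE /= !permM !tfix // (ltn_trans ui ia).
Qed.

Lemma exists_mono g : exists s : {perm 'I_n}, qmonob (hs g s).
Proof.
pose below s := [set s' : {perm 'I_n} | lexlt (qf (hs g s')) (qf (hs g s))].
suff: forall m s, #|below s| <= m -> exists s', qmonob (hs g s').
  by move=> /(_ _ 1%g (leqnn _)).
elim=> [|m IH] s bs; case Q: (qmonob (hs g s)); try by exists s.
all: have : ~~ adjb (hs g s) by apply/negP => /adj_mono; rewrite Q.
all: move=> /forallPn [a /forallPn [b]]; rewrite negb_imply => /andP[/eqP ba].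
all: rewrite -ltnNge => lt; have L := swap_step ba lt.
all: have sub : below (tperm a b * s)%g \proper below s.
all: try (apply/properP; split; [apply/subsetP => x; rewrite !inE => xl; exact: lexlt_trans xl L
   | exists (tperm a b * s)%g; [by rewrite inE | by rewrite inE lexlt_irr]]).
- by move: bs; rewrite leqn0 => /eqP /cards0_eq E; move: (proper_card sub); rewrite E cards0.
- by apply: (IH (tperm a b * s)%g); rewrite -ltnS (leq_trans (proper_card sub)).
Qed.

Definition rootn h (v : 'I_n) : nat :=
  \max_(r : 'I_n | (r <= v) && (qf h r == r)) (r : nat).

Lemma root_le h v : rootn h v <= v.
Proof. by apply/bigmax_leqP => r /andP[]. Qed.

Lemma root_ge h (r v : 'I_n) : r <= v -> qf h r = r -> r <= rootn h v.
Proof.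
by move=> rv qr; apply: (@leq_bigmax_cond _ (fun r : 'I_n => (r <= v) && (qf h r == r)) (fun r : 'I_n => val r)); rewrite rv qr eqxx.
Qed.

Lemma root_is h v : exists2 r : 'I_n, val r = rootn h v & qf h r = r.
Proof.
have n0 : 0 < n by apply: leq_ltn_trans (ltn_ord v).
pose r0 := Ordinal n0.
have P0 : (r0 <= v) && (qf h r0 == r0).
  by have := qf_le h r0; rewrite /= leqn0 => ->.
rewrite /rootn (bigmax_eq_arg r0) //.
by case: arg_maxnP => // r /andP[_ /eqP qr] _; exists r.
Qed.

Lemma root_mono h (w v : 'I_n) : w <= v -> rootn h w <= rootn h v.
Proof.
move=> wv; have [r rE qr] := root_is h w.
by rewrite -rE; apply: root_ge => //; rewrite (leq_trans _ wv) // rE root_le.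
Qed.

Lemma root_sand h (w v : 'I_n) : rootn h v <= w -> w <= v -> rootn h w = rootn h v.
Proof.
move=> rw wv; apply/eqP; rewrite eqn_leq root_mono //=.
by have [r rE qr] := root_is h v; rewrite -rE root_ge // rE.
Qed.

Lemma root_self h (v : 'I_n) : qf h v = v -> rootn h v = v.
Proof. by move=> qv; apply/eqP; rewrite eqn_leq root_le root_ge. Qed.

Lemma root_edge h (u v : 'I_n) : qmonob h -> u < v -> h (u,v) -> rootn h u = rootn h v.
Proof.
move=> /forallP M uv huv.
have [r rE qr] := root_is h v.
have rlu : rootn h v <= u.
  rewrite leqNgt; apply/negP => ur.
  have rv : r <= v by rewrite rE root_le.
  have := implyP (forallP (M r) v) rv; rewrite qr.
  move=> /(leq_trans) /(_ (qf_min uv huv)); rewrite rE leqNgt ur.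
  done.
exact: root_sand rlu (ltnW uv).
Qed.

Lemma exp_monoB a b e : a <= b -> a ^ e <= b ^ e.
Proof. by move=> ab; elim: e => // e IH; rewrite !expnS leq_mul. Qed.

Definition rt h (v : 'I_n) : 'I_n := insubd v (rootn h v).

Lemma rtE h v : val (rt h v) = rootn h v.
Proof. by rewrite val_insubd (leq_ltn_trans (root_le h v) (ltn_ord v)). Qed.

Definition wgt (x : 'I_n * 'I_n) : nat :=
  if x.1 < x.2 then (x.2 - x.1) * (x.2 - x.1).+2 else 1.
Definition Xs h : {set 'I_n * 'I_n} :=
  [set x : 'I_n * 'I_n | (x.1 < x.2) && h x && (val x.1 != qf h x.2)].
Definition Bk h r := [set v : 'I_n | rt h v == r].
Definition Xr h r := [set x in Xs h | rt h x.2 == r].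
Definition Tset h r := [set x : 'I_n * 'I_n | (x.1 < x.2) && h x && (rt h x.2 == r) && (val x.1 == qf h x.2)].

Lemma rt_edge h (u v : 'I_n) : qmonob h -> u < v -> h (u,v) -> rt h u = rt h v.
Proof. by move=> M uv huv; apply: val_inj; rewrite !rtE; exact: root_edge. Qed.

Lemma gap h r (a b : 'I_n) : qmonob h -> a < b -> h (a, b) -> rt h b = r ->
  b - a < #|Bk h r|.
Proof.
move=> M ab hab rb.
have rab : rootn h a = rootn h b by apply: root_edge.
pose f (i : 'I_(b - a).+1) : 'I_n := insubd b (a + i).
have fv (i : 'I_(b - a).+1) : val (f i) = a + i.
  rewrite val_insubd; have := ltn_ord i; have := ltn_ord b; case: ifP => //; lia.
have finj : injective f.
  by move=> i j /(congr1 val); rewrite !fv => /addnI /val_inj.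
have sub : f @: [set: 'I_(b - a).+1] \subset Bk h r.
  apply/subsetP => w /imsetP[i _ ->]; rewrite inE; apply/eqP; apply: val_inj.
  rewrite -rb !rtE; apply: root_sand; rewrite fv.
  - by rewrite -rab (leq_trans (root_le h a)) // leq_addr.
  - by have := ltn_ord i; lia.
by have := subset_leq_card sub; rewrite card_imset // cardsT card_ord.
Qed.

Lemma blk_prod h r : qmonob h ->
  \prod_(x in Xr h r) wgt x <= (3 * #|Bk h r| ^ 2) ^ #|Xr h r|.
Proof.
move=> M; rewrite -prod_nat_const; apply: leq_prod => -[a b].
rewrite !inE /= => /andP[/andP[/andP[ab hab] _] /eqP rb].
have := gap M ab hab rb; rewrite /wgt /= ab.
set k := #|Bk h r|; move=> gk; nia.
Qed.

Lemma Xr_small h r : qmonob h -> #|Xr h r| <= #|Bk h r| * #|Bk h r|.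
Proof.
move=> M; rewrite -cardsX; apply: subset_leq_card; apply/subsetP => -[a b].
rewrite !inE /= => /andP[/andP[/andP[ab hab] _] /eqP rb].
by rewrite (rt_edge M ab hab) rb eqxx.
Qed.

Lemma tree_card h r : #|Bk h r| - 1 <= #|Tset h r|.
Proof.
have := cardsD1 r (Bk h r) => E.
have : #|Bk h r :\ r| <= #|Tset h r|.
  apply: leq_trans (leq_imset_card (fun x : 'I_n * 'I_n => x.2) _).
  apply: subset_leq_card; apply/subsetP => v; rewrite !inE => /andP[vr /eqP rv].
  have qv : qf h v < v.
    rewrite ltn_neqAle qf_le andbT; apply/negP => /eqP qv.
    move/negP: vr; apply; apply/eqP; apply: val_inj; rewrite -rv rtE root_self //.
  have [u /andP[uv huv] qu] := qf_att qv.
  by apply/imsetP; exists (u, v) => //; rewrite inE /= uv huv rv eqxx qu eqxx.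
lia.
Qed.

Lemma set2_inj (a b c d : 'I_n) : a < b -> c < d -> [set a; b] = [set c; d] ->
  (a, b) = (c, d).
Proof.
move=> ab cd E.
have ha : a \in [set c; d] by rewrite -E set21.
have hb : b \in [set c; d] by rewrite -E set22.
have hc : c \in [set a; b] by rewrite E set21.
move: ha hb hc; rewrite !inE => /orP[/eqP ac|/eqP ad] /orP[/eqP bc|/eqP bd] /orP[/eqP ca|/eqP cb];
  subst => //; try lia.
Qed.

Lemma Xr_big d h r : S_class d (adj_rel h) -> qmonob h ->
  1000 ^ (10 * (d + 1)) <= #|Bk h r| ->
  Rle (INR #|Xr h r|) (Rdiv (INR #|Bk h r|) (ln (INR #|Bk h r|))).
Proof.
move=> [_ HS] M Nk.
have k1 : 0 < #|Bk h r| by apply: leq_trans Nk; rewrite expn_gt0.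
pose Pr := [set x : 'I_n * 'I_n | (x.1 < x.2) && h x && (rt h x.2 == r)].
pose C := [set x : 'I_n * 'I_n | val x.1 == qf h x.2].
have e1 : Pr :&: C = Tset h r.
  by apply/setP => x; rewrite !inE; case: (_ < _); case: (h x); case: (_ == r); case: (_ == _).
have e2 : Pr :\: C = Xr h r.
  by apply/setP => x; rewrite !inE; case: (_ < _); case: (h x); case: (_ == r); case: (_ == _).
have cP : #|Pr| = #|Tset h r| + #|Xr h r| by rewrite -e1 -e2 cardsID.
pose F := [set [set x.1; x.2] | x in Pr].
have cF : #|F| = #|Pr|.
  apply: card_in_imset => -[a b] [c e]; rewrite !inE /= => /andP[/andP[ab _] _] /andP[/andP[ce _] _].
  exact: set2_inj.
have sg : is_subgraph (adj_rel h) (Bk h r) F.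
  split.
  - apply/subsetP => A /imsetP[[a b] xP ->]; apply/edgesP; exists a, b; split => //.
    by move: xP; rewrite inE /= => /andP[/andP[_ hab] _].
  - move=> A /imsetP[[a b] xP ->]; move: xP; rewrite inE /= => /andP[/andP[ab hab] /eqP rb].
    by rewrite subUset !sub1set !inE (rt_edge M ab hab) rb eqxx.
have := HS #|Bk h r| _ (Bk h r) F erefl sg.
rewrite Nk max_card => /(_ isT).
rewrite cF cP; have := tree_card h r.
move: (#|Bk h r|) k1 (#|Tset h r|) (#|Xr h r|) => k k1 t x tk.
have tk' : Rle (Rminus (INR k) R1) (INR t).
  have := le_INR (k - 1) t ltac:(by apply/leP); rewrite minus_INR; last by apply/leP.
  by rewrite /=; lra.
rewrite plus_INR; lra.
Qed.

Lemma Xs_bound d h : S_class d (adj_rel h) -> qmonob h ->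
  \prod_(x in Xs h) wgt x <=
    ((3 * (1000 ^ (10 * (d + 1))) ^ 2) ^ (1000 ^ (10 * (d + 1)))) ^ n.
Proof.
move=> HS M.
have N3 : 3 <= 1000 ^ (10 * (d + 1)).
  apply: leq_trans (_ : 1000 ^ 1 <= _); first by [].
  by apply: leq_pexp2l => //; rewrite muln_gt0 addn1.
have XB := Xr_big HS M.
move: (1000 ^ (10 * (d + 1))) N3 XB => N N3 XB.
set K := (3 * N ^ 2) ^ N.
have K27 : 27 <= K.
  apply: leq_trans (_ : 3 * N ^ 2 <= K).
    by apply: leq_trans (_ : 3 * 3 ^ 2 <= _); [by [] | rewrite leq_mul2l /= exp_monoB].
  rewrite /K; apply: (@leq_trans ((3 * N ^ 2) ^ 1)); first by rewrite expn1.
  apply: leq_pexp2l; last lia. by rewrite muln_gt0 expn_gt0; apply/andP; split => //; apply/orP; left; lia.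
have Sn : \sum_(j : 'I_n) #|Bk h j| = n.
  transitivity (\sum_(v : 'I_n) 1); last by rewrite sum1_card card_ord.
  rewrite [RHS](partition_big (rt h) xpredT) //=.
  by apply: eq_bigr => j _; rewrite -sum1_card; apply: eq_bigl => v; rewrite !inE.
apply: (@leq_trans (\prod_(j : 'I_n) K ^ #|Bk h j|)); last by rewrite -expn_sum Sn.
rewrite (partition_big (fun x : 'I_n * 'I_n => rt h x.2) xpredT) //=.
apply: leq_prod => j _.
rewrite (eq_bigl (fun x => x \in Xr h j)); last by move=> x; rewrite !inE.
apply: leq_trans (blk_prod j M) _.
set k := #|Bk h j|.
have xs := Xr_small j M.
case: (ltnP k N) => kN.
- case: (posnP k) => [k0 | kpos].
    by move: xs; rewrite -/k k0 leqn0 => /eqP ->; rewrite expn0.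
  apply: (@leq_trans ((3 * k ^ 2) ^ (k * k))).
    by apply: leq_pexp2l => //; rewrite muln_gt0 expn_gt0 kpos.
  apply: (@leq_trans ((3 * N ^ 2) ^ (k * k))).
    by apply: exp_monoB; rewrite leq_mul2l exp_monoB // ltnW.
  rewrite /K -expnM; apply: leq_pexp2l; first by rewrite muln_gt0 expn_gt0; lia.
  by rewrite mulnC leq_mul2l ltnW // orbT.
- have k3 : 3 <= k by apply: leq_trans kN.
  apply: leq_trans (real_bound k3 (XB j kN)) _.
  exact: exp_monoB.
Qed.

Definition U := [set x : 'I_n * 'I_n | x.1 < x.2].
Definition Vset (M : nat) :=
  [set X : {set 'I_n * 'I_n} | (X \subset U) && (\prod_(x in X) wgt x <= M)].

Lemma wgt_pos x : 0 < wgt x.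
Proof. by rewrite /wgt; case: ifP => // lt; rewrite muln_gt0 subn_gt0 lt. Qed.

Lemma Vcard M : #|Vset M| <= M * 2 ^ n.
Proof.
set P := \prod_(x : 'I_n * 'I_n) wgt x.
have P0 : 0 < P by rewrite prodn_gt0 // => x; exact: wgt_pos.
pose F (x : 'I_n * 'I_n) := if x \in U then 1 else 0.
pose T (X : {set 'I_n * 'I_n}) := \prod_(x : 'I_n * 'I_n) (if x \in X then F x else wgt x).
have PT (X : {set 'I_n * 'I_n}) : X \subset U -> P = (\prod_(x in X) wgt x) * T X.
  move=> XU; rewrite big_mkcond -big_split /=; apply: eq_bigr => x _.
  case: ifP => xX; last by rewrite mul1n.
  by rewrite /F (subsetP XU x xX) muln1.
have S1 : #|Vset M| * P <= M * \sum_(X : {set 'I_n * 'I_n}) T X.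
  rewrite -sum1_card big_distrl /= big_distrr /=.
  apply: (@leq_trans (\sum_(X : {set 'I_n * 'I_n} | X \in Vset M) M * T X)).
    apply: leq_sum => X; rewrite inE => /andP[XU XM]; rewrite mul1n (PT X XU).
    by rewrite leq_mul2r XM orbT.
  rewrite [X in _ <= X](bigID (fun X => X \in Vset M)) /=; exact: leq_addr.
have S2 : \sum_(X : {set 'I_n * 'I_n}) T X = \prod_(x : 'I_n * 'I_n) (F x + wgt x).
  by rewrite (bigA_distr 1 addn F wgt).
have S3 : \prod_(x : 'I_n * 'I_n) (F x + wgt x) <= 2 ^ n * P.
  have E1 : \prod_(x : 'I_n * 'I_n) (F x + wgt x) =
     \prod_(v : 'I_n) \prod_(u : 'I_n) (F (u, v) + wgt (u, v)).
    by rewrite exchange_big pair_bigA; apply: eq_bigr => -[].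
  have E2 : P = \prod_(v : 'I_n) \prod_(u : 'I_n) wgt (u, v).
    by rewrite exchange_big pair_bigA; apply: eq_bigr => -[].
  have E3 : 2 ^ n = \prod_(v : 'I_n) 2 by rewrite prod_nat_const card_ord.
  rewrite E1 E2 E3 -big_split /=.
  apply: leq_prod => v _.
  have := @col_bound n v (ltnW (ltn_ord v)).
  congr (_ <= _ * _); apply: eq_bigr => u _; rewrite /F /wgt inE /=; by case: ifP.
have : #|Vset M| * P <= (M * 2 ^ n) * P.
  by rewrite -mulnA (leq_trans S1) // S2 leq_mul2l S3 orbT.
by rewrite leq_mul2r => /orP[/eqP P00|//]; rewrite P00 in P0.
Qed.

Definition Acan (M : nat) := [set h : G | [&& simpleb h, qmonob h & Xs h \in Vset M]].

Definition qt h : n.-tuple 'I_n.+1 := [tuple inord (qf h i) | i < n].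

Lemma qt_val h i : val (tnth (qt h) i) = qf h i.
Proof.
by rewrite tnth_mktuple; apply: inordK; rewrite ltnS (leq_trans (qf_le h i)) // ltnW.
Qed.

Lemma h_char h (u v : 'I_n) : u < v -> h (u, v) = (val u == qf h v) || ((u, v) \in Xs h).
Proof.
move=> uv; rewrite inE /= uv /=.
case: eqP => [E | _]; last by rewrite andbT.
have : qf h v < v by rewrite -E.
move=> /qf_att [w /andP[_ hw] qw].
by have -> : u = w by apply: val_inj; rewrite /= E qw.
Qed.

Lemma simpleb_sym h x y : simpleb h -> h (x, y) = h (y, x).
Proof. by case/andP => /forallP /(_ x) /forallP /(_ y) /eqP. Qed.

Lemma simpleb_irr h x : simpleb h -> h (x, x) = false.
Proof. by case/andP => _ /forallP /(_ x) /negbTE. Qed.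

Lemma Acard M : #|Acan M| <= 'C(n + n, n) * (M * 2 ^ n).
Proof.
pose code h := (qt h, Xs h).
have inj : {in Acan M &, injective code}.
  move=> h1 h2; rewrite !inE => /and3P[s1 _ _] /and3P[s2 _ _] [Eq EX].
  have Eq' : qt h1 = qt h2 by apply: val_inj.
  have Eqf i : qf h1 i = qf h2 i by rewrite -!qt_val Eq'.
  apply/ffunP => -[u v].
  case: (ltngtP u v) => [uv | vu | /val_inj uv].
  - by rewrite !h_char // Eqf EX.
  - by rewrite simpleb_sym // [RHS]simpleb_sym // !h_char // Eqf EX.
  - by subst v; rewrite !simpleb_irr.
rewrite -(card_in_imset inj).
apply: (@leq_trans (#|[set t : n.-tuple 'I_n.+1 | sorted leq (map val t)]| * #|Vset M|)); last first.
  by rewrite card_sorted_tuples leq_mul2l Vcard orbT.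
rewrite -cardsX.
apply: subset_leq_card; apply/subsetP => c /imsetP[h hA ->].
move: hA; rewrite !inE => /and3P[_ /forallP M1 ->]; rewrite andbT.
have -> : [seq val i | i <- qt h] = [seq qf h i | i <- enum 'I_n].
  by rewrite /qt /= -map_comp; apply: eq_map => i /=; rewrite inordK // ltnS (leq_trans (qf_le h i)) // ltnW.
rewrite sorted_map.
have : sorted (fun u v : 'I_n => u <= v) (enum 'I_n).
  by have := iota_sorted 0 n; rewrite -val_enum_ord sorted_map.
apply: sub_sorted => u v uv; exact: (implyP (forallP (M1 u) v) uv).
Qed.

End Q.

Lemma isob_refl n (g : {ffun 'I_n * 'I_n -> bool}) : isob g g.
Proof. by apply/existsP; exists 1%g; apply/forallP => x; apply/forallP => y; rewrite !perm1. Qed.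

Lemma isob_sym n (g h : {ffun 'I_n * 'I_n -> bool}) : isob g h -> isob h g.
Proof.
move=> /existsP[p /forallP P]; apply/existsP; exists p^-1%g.
apply/forallP => x; apply/forallP => y.
by have := forallP (P (p^-1 x)%g) (p^-1 y)%g; rewrite !permKV eq_sym.
Qed.

Lemma isob_trans n (g h k : {ffun 'I_n * 'I_n -> bool}) : isob g h -> isob h k -> isob g k.
Proof.
move=> /existsP[p /forallP P] /existsP[q /forallP Q]; apply/existsP; exists (p * q)%g.
apply/forallP => x; apply/forallP => y.
by rewrite !permM (eqP (forallP (P x) y)) (eqP (forallP (Q (p x)) (p y))).
Qed.

Lemma card_fun_le (T1 T2 T3 : finType) (D : {set T1}) (f : T1 -> T2) (g : T1 -> T3) :
  {in D &, forall x y, g x = g y -> f x = f y} -> #|f @: D| <= #|g @: D|.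
Proof.
move=> H; case: (set_0Vmem D) => [-> | [x0 _]]; first by rewrite !imset0 !cards0.
pose rep (b : T2) := odflt x0 [pick x in D | f x == b].
have repP b : b \in f @: D -> rep b \in D /\ f (rep b) = b.
  move=> /imsetP[x xD ->]; rewrite /rep; case: pickP => [y /andP[yD /eqP fy] | /(_ x)].
    by [].
  by rewrite xD eqxx.
have inj : {in f @: D &, injective (g \o rep)}.
  move=> b b' bD b'D /= E.
  have [r1 e1] := repP b bD; have [r2 e2] := repP b' b'D.
  by rewrite -e1 -e2; apply: H.
rewrite -(card_in_imset inj); apply: subset_leq_card; apply/subsetP => c /imsetP[b bD ->].
by apply/imsetP; exists (rep b) => //; case: (repP b bD).
Qed.

Lemma classes_le n (D A : {set {ffun 'I_n * 'I_n -> bool}}) :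
  (forall g, g \in D -> exists2 h, h \in A & isob g h) ->
  #|equivalence_partition (@isob n) D| <= #|A|.
Proof.
move=> H.
pose pk (x : {ffun 'I_n * 'I_n -> bool}) := [pick h in A | isob x h].
have pkP x : x \in D -> exists2 h, pk x = Some h & (h \in A) && isob x h.
  move=> xD; rewrite /pk; case: pickP => [h hP | E]; first by exists h.
  by have [h hA hx] := H x xD; have := E h; rewrite hA hx.
apply: (@leq_trans #|pk @: D|).
  apply: card_fun_le => x y xD yD.
  have [h -> /andP[_ xh]] := pkP x xD; have [h' -> /andP[_ yh]] := pkP y yD.
  case=> E; subst h'; apply/setP => z; rewrite !inE; congr (_ && _).
  apply/idP/idP => Hz.
  - exact: isob_trans yh (isob_trans (isob_sym xh) Hz).
  - exact: isob_trans xh (isob_trans (isob_sym yh) Hz).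
apply: (@leq_trans #|[set Some h | h in A]|); last by rewrite card_imset //; exact: Some_inj.
apply: subset_leq_card; apply/subsetP => o /imsetP[x xD ->].
by have [h -> /andP[hA _]] := pkP x xD; apply/imsetP; exists h.
Qed.

Lemma simpleb_simple n (h : {ffun 'I_n * 'I_n -> bool}) : simpleb h -> simple_graph (adj_rel h).
Proof. by move=> sh; split => [x y | x]; [exact: simpleb_sym | exact: simpleb_irr]. Qed.

Definition Kc d := (3 * (1000 ^ (10 * (d + 1))) ^ 2) ^ (1000 ^ (10 * (d + 1))).

Lemma canon d n (g : {ffun 'I_n * 'I_n -> bool}) : simpleb g -> S_class d (adj_rel g) ->
  exists2 h, h \in Acan n (Kc d ^ n) & isob g h.
Proof.
move=> sg Cg; have [s Ms] := exists_mono g.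
have sh : simpleb (hs g s).
  apply/andP; split.
  - by apply/forallP => x; apply/forallP => y; rewrite !ffunE /= simpleb_sym.
  - by apply/forallP => x; rewrite ffunE /= simpleb_irr.
have HS : S_class d (adj_rel (hs g s)).
  apply: ((S_mono d).1 _ _ _ _ (simpleb_simple sh) Cg).
  exists s; split; first exact: (Bijective (permK s) (permKV s)).
  by move=> x y; rewrite /adj_rel ffunE.
exists (hs g s).
  rewrite inE sh Ms /= inE; apply/andP; split; last exact: Xs_bound.
  by apply/subsetP => x; rewrite !inE => /andP[/andP[-> _] _].
apply/existsP; exists s^-1%g; apply/forallP => x; apply/forallP => y.
by rewrite ffunE /= !permKV.
Qed.

Theorem mainTheorem8 (d : nat) : monotone (S_class d) /\ tiny (S_class d).
Proof.
split; first exact: S_mono.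
split; first by split; [exact: (S_mono d).1 | exact: S_induced].
exists (INR (8 * Kc d)) => n.
rewrite -pow_INR -expn_pow; apply: le_INR; apply/leP.
rewrite /n_unlabeled.
apply: leq_trans (classes_le (A := Acan n (Kc d ^ n)) _) _.
  by move=> g; rewrite inE => /andP[sg /asboolP Cg]; exact: canon.
apply: leq_trans (Acard _ _) _.
apply: (@leq_trans (2 ^ (n + n) * (Kc d ^ n * 2 ^ n))).
  by rewrite leq_mul2r bin_le orbT.
rewrite expnMn.
have -> : 8 ^ n = 2 ^ (n + n + n) by rewrite -(expnM 2 3 n) mulSn mul2n -addnn addnA.
rewrite (mulnC (Kc d ^ n)) mulnA -expnD.
by [].
Qed.
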